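(* The single-machine scheduling problem $1|\text{two chains}|\sum w_jC_j$ can be solved in $O(n)$ time, where $n$ is the number of jobs.
   Context: The problem $1|\text{two chains}|\sum w_jC_j$ is defined as follows. There are $n$ jobs, and job $j$ has processing time $p_j>0$ and weight $w_j\ge 0$. The jobs are partitioned into two chains (linear orders), and within each chain the jobs must be processed in the chain order. A single machine processes one job at a time, without preemption, starting at time $0$. $C_j$ denotes the completion time of job $j$. The goal is to find a feasible sequence of jobs minimizing $\sum_j w_jC_j$. *)

(* Defs.v *)
From HB Require Import structures.
From mathcomp Require Import all_boot all_order all_algebra.
From mathcomp Require Import reals.
Set Implicit Arguments. Unset Strict Implicit. Unset Printing Implicit Defensive.
Import Order.TTheory GRing.Theory Num.Theory.
Local Open Scope ring_scope.

(* A job is a pair (p_j, w_j).  The two chains are given as two        *)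
(* sequences A and B (chain order = sequence order).                   *)

Section Sched.
Variable R : realType.
Definition job := (R * R)%type.

Fixpoint interleave (s : seq bool) (A B : seq job) : seq job :=
  match s with
  | [::] => [::]
  | b :: s' =>
      if b then
        match A with [::] => [::] | a :: A' => a :: interleave s' A' B end
      else
        match B with [::] => [::] | c :: B' => c :: interleave s' A B' end
  end.

(* s describes a feasible sequence: every job of both chains is taken
   exactly once, in chain order.  Feasible sequences of the jobs are
   exactly the sequences interleave s A B for such s. *)
Definition feasible_interleaving (A B : seq job) (s : seq bool) : Prop :=
  count id s = size A /\ count negb s = size B.

Definition completion (js : seq job) (t : nat) : R :=
  \sum_(u < t.+1) (nth (0, 0) js u).1.

Definition twct (js : seq job) : R :=
  \sum_(t < size js) (nth (0, 0) js t).2 * completion js t.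

Definition optimal_interleaving (A B : seq job) (s : seq bool) : Prop :=
  feasible_interleaving A B s /\
  forall s', feasible_interleaving A B s' ->
    twct (interleave s A B) <= twct (interleave s' A B).

Definition valid_instance (A B : seq job) : Prop :=
  forall j, j \in A ++ B -> 0 < j.1 /\ 0 <= j.2.
End Sched.

(* Machine model: a real RAM with unit cost per instruction.          *)

Inductive instr : Type :=
| ISet   (d k : nat)
| IAdd   (d a b : nat)
| ISub   (d a b : nat)      (* ir d := ir a - ir b (truncated)  *)
| ILoad  (d a : nat)
| IStore (a s : nat)
| RSet0  (d : nat)
| RSet1  (d : nat)
| RAdd   (d a b : nat)
| RSub   (d a b : nat)
| RMul   (d a b : nat)
| RDiv   (d a b : nat)      (* rr d := rr a / rr b  (x/0 = 0)   *)
| RLoad  (d a : nat)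
| RStore (a s : nat)
| JEqI   (a b l : nat)
| JLeI   (a b l : nat)
| JLeR   (a b l : nat)
| Jmp    (l : nat)
| Halt.

Definition program := seq instr.

Section Machine.
Variable R : realType.

Record state := State {
  pc : nat;
  ir : nat -> nat;  im : nat -> nat;
  rr : nat -> R;    rm : nat -> R }.

Definition upd {T : Type} (f : nat -> T) (i : nat) (v : T) : nat -> T :=
  fun j => if j == i then v else f j.

(* One step; None iff the machine has halted (Halt instruction or pc
   outside the program). *)
Definition step (P : program) (st : state) : option state :=
  let: State p ir im rr rm := st in
  let nx := p.+1 in
  match nth Halt P p with
  | ISet d k     => Some (State nx (upd ir d k) im rr rm)
  | IAdd d a b   => Some (State nx (upd ir d (ir a + ir b)%N) im rr rm)
  | ISub d a b   => Some (State nx (upd ir d (ir a - ir b)%N) im rr rm)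
  | ILoad d a    => Some (State nx (upd ir d (im (ir a))) im rr rm)
  | IStore a s   => Some (State nx ir (upd im (ir a) (ir s)) rr rm)
  | RSet0 d      => Some (State nx ir im (upd rr d 0) rm)
  | RSet1 d      => Some (State nx ir im (upd rr d 1) rm)
  | RAdd d a b   => Some (State nx ir im (upd rr d (rr a + rr b)) rm)
  | RSub d a b   => Some (State nx ir im (upd rr d (rr a - rr b)) rm)
  | RMul d a b   => Some (State nx ir im (upd rr d (rr a * rr b)) rm)
  | RDiv d a b   => Some (State nx ir im (upd rr d (rr a / rr b)) rm)
  | RLoad d a    => Some (State nx ir im (upd rr d (rm (ir a))) rm)
  | RStore a s   => Some (State nx ir im rr (upd rm (ir a) (rr s)))
  | JEqI a b l   => Some (State (if ir a == ir b then l else nx) ir im rr rm)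
  | JLeI a b l   => Some (State (if (ir a <= ir b)%N then l else nx) ir im rr rm)
  | JLeR a b l   => Some (State (if rr a <= rr b then l else nx) ir im rr rm)
  | Jmp l        => Some (State l ir im rr rm)
  | Halt         => None
  end.

Fixpoint run (P : program) (fuel : nat) (st : state) : state :=
  match fuel with
  | 0 => st
  | f.+1 => match step P st with Some st' => run P f st' | None => st end
  end.

Definition halted (P : program) (st : state) : Prop := step P st = None.

(* Input encoding: im 0 = |A|, im 1 = |B|; the real memory holds
   p(a_1), w(a_1), ..., p(a_k), w(a_k), p(b_1), w(b_1), ..., p(b_m), w(b_m)
   in cells 0, 1, 2, ...; everything else (registers, other cells) is 0. *)
Definition init_state (A B : seq (job R)) : state :=
  State 0 (fun _ => 0%N)
        (fun i => if i == 0%N then size A else if i == 1%N then size B else 0%N)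
        (fun _ => 0)
        (fun i => nth 0 (flatten [seq [:: j.1; j.2] | j <- A ++ B]) i).

(* Output decoding: the t-th job of the computed sequence (t < |A|+|B|)
   comes from chain A iff im (2 + t) != 0. *)
Definition output (A B : seq (job R)) (st : state) : seq bool :=
  [seq im st (2 + t)%N != 0%N | t <- iota 0 (size A + size B)].
End Machine.

(* Main.v *)
Require Import Defs.
From HB Require Import structures.
From mathcomp Require Import all_boot all_order all_algebra.
From mathcomp Require Import reals.
From mathcomp Require Import ring lra zify.
Set Implicit Arguments. Unset Strict Implicit. Unset Printing Implicit Defensive.
Import Order.TTheory GRing.Theory Num.Theory.
Local Open Scope ring_scope.

Section Abs.
Variable R : realType.
Local Notation job := (job R).
Implicit Types (A B X Y Z js : seq job).

Definition Pj js : R := \sum_(j <- js) j.1.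
Definition Wj js : R := \sum_(j <- js) j.2.
Definition rt js : R := Wj js / Pj js.

Lemma Pj_cat X Y : Pj (X ++ Y) = Pj X + Pj Y. Proof. by rewrite /Pj big_cat. Qed.
Lemma Wj_cat X Y : Wj (X ++ Y) = Wj X + Wj Y. Proof. by rewrite /Wj big_cat. Qed.
Lemma Pj_cons x X : Pj (x :: X) = x.1 + Pj X. Proof. by rewrite /Pj big_cons. Qed.
Lemma Wj_cons x X : Wj (x :: X) = x.2 + Wj X. Proof. by rewrite /Wj big_cons. Qed.
Lemma Pj_nil : Pj [::] = 0. Proof. by rewrite /Pj big_nil. Qed.
Lemma Wj_nil : Wj [::] = 0. Proof. by rewrite /Wj big_nil. Qed.

Fixpoint cost js : R :=
  match js with [::] => 0 | x :: js' => x.1 * (x.2 + Wj js') + cost js' end.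

Lemma twct_cost js : twct js = cost js.
Proof.
elim: js => [|x js IH]; first by rewrite /twct big_ord0.
rewrite /twct /= big_ord_recl /=.
have E : forall i : 'I_(size js),
   (nth (0, 0) (x :: js) (bump 0 i)).2 * completion (x :: js) (bump 0 i)
   = x.1 * (nth (0,0) js i).2 + (nth (0, 0) js i).2 * completion js i.
  move=> i; rewrite /bump /= /completion big_ord_recl /=.
  have -> : \sum_(i0 < i.+1) (nth (0, 0) (x :: js) (bump 0 i0)).1 =
            \sum_(u < i.+1) (nth (0, 0) js u).1.
    by apply: eq_bigr => u _; rewrite /bump /=.
  by ring.
rewrite (eq_bigr _ (fun i _ => E i)) big_split /= -mulr_sumr.
rewrite -IH /twct /completion big_ord1 /=.
have -> : \sum_(i < size js) (nth (0, 0) js i).2 = Wj js.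
  by rewrite /Wj (big_nth (0,0)) big_mkord.
by ring.
Qed.

Lemma W_interleave s A B : count id s = size A -> count negb s = size B ->
  Wj (interleave s A B) = Wj A + Wj B.
Proof.
elim: s A B => [|b s IH] A B /=.
  by case: A => // _; case: B => // _; rewrite Wj_nil addr0.
case: b => /=.
  case: A => [|a A] //= [HA] HB.
  by rewrite !Wj_cons IH // addrA.
case: B => [|c B] // HA [HB].
by rewrite !Wj_cons IH // addrCA.
Qed.

Fixpoint prof (s : seq bool) : seq nat :=
  match s with
  | [::] => [::]
  | true :: s' => 0%N :: prof s'
  | false :: s' => map S (prof s')
  end.

Definition term B (a : job) (h : nat) : R :=
  a.2 * Pj (take h B) + a.1 * (Wj B - Wj (take h B)).

Definition cross A B (hs : seq nat) : R := \sum_(x <- zip A hs) term B x.1 x.2.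

Lemma size_prof s : size (prof s) = count id s.
Proof. by elim: s => [|[] s IH] //=; rewrite ?size_map IH. Qed.

Lemma cross_S A b B hs : size hs = size A ->
  cross A (b :: B) (map S hs) = b.1 * Wj A + cross A B hs.
Proof.
elim: A hs => [|a A IH] [|h hs] //= .
  by move=> _; rewrite /cross /= !big_nil Wj_nil mulr0 addr0.
move=> [Hs]; rewrite /cross /= !big_cons.
rewrite -/(cross A (b :: B) (map S hs)) -/(cross A B hs) IH // Wj_cons.
rewrite /term /= !Pj_cons !Wj_cons; ring.
Qed.

Lemma cost_interleave s A B : count id s = size A -> count negb s = size B ->
  cost (interleave s A B) = cost A + cost B + cross A B (prof s).
Proof.
elim: s A B => [|b s IH] A B /=.
  by case: A => // _; case: B => // _; rewrite /cross big_nil /=; ring.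
case: b => /=.
  case: A => [|a A] //= [HA] HB.
  rewrite W_interleave // IH // /cross /= big_cons /term /= take0 Pj_nil Wj_nil.
  ring.
case: B => [|c B] // HA [HB].
rewrite /= W_interleave // IH // cross_S ?size_prof //=.
ring.
Qed.

Lemma prof_sorted s : sorted leq (prof s).
Proof.
elim: s => [|[] s IH] //=.
  case: (prof s) IH => //= h hs ->; by rewrite andbT.
by rewrite sorted_map.
Qed.


Lemma abel (X : seq job) (hs : seq nat) (f : job -> R) (g : nat -> R) :
  size X = size hs -> sorted leq hs ->
  (forall a b, (a <= b)%N -> g a <= g b) ->
  (forall j, 0 <= \sum_(x <- drop j X) f x) ->
  forall c, (forall h, h \in hs -> c <= g h) ->
  c * \sum_(x <- X) f x <= \sum_(x <- zip X hs) f x.1 * g x.2.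
Proof.
elim: X hs => [|x X IH] [|h hs] //=.
  by move=> _ _ _ _ c _; rewrite !big_nil mulr0.
move=> [Hs] Hsort Hg Hsuf c Hc.
rewrite !big_cons.
have Hsort' : sorted leq hs by apply: (path_sorted Hsort).
have Hall : all (leq h) hs by apply: order_path_min => //; exact: leq_trans.
have IH' := IH hs Hs Hsort' Hg (fun j => Hsuf j.+1) (g h).
have H1 : g h * \sum_(x0 <- X) f x0 <= \sum_(x0 <- zip X hs) f x0.1 * g x0.2.
  apply: IH' => h' Hh'; apply: Hg; exact: (allP Hall).
have H0 := Hsuf 0%N; rewrite drop0 big_cons in H0.
have Hch : c <= g h by apply: Hc; rewrite inE eqxx.
have H2 : c * (f x + \sum_(x0 <- X) f x0) <= g h * (f x + \sum_(x0 <- X) f x0).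
  by apply: ler_wpM2r.
nra.
Qed.

Lemma sum_zip1 (X : seq job) (hs : seq nat) (F : job -> R) :
  size X = size hs -> \sum_(x <- zip X hs) F x.1 = \sum_(x <- X) F x.
Proof.
elim: X hs => [|x X IH] [|h hs] //=; first by rewrite !big_nil.
by move=> [Hs]; rewrite !big_cons IH.
Qed.

Lemma sum_zip_nseq (X : seq job) (h : nat) (F : job -> nat -> R) :
  \sum_(x <- zip X (nseq (size X) h)) F x.1 x.2 = \sum_(x <- X) F x h.
Proof. by elim: X => [|x X IH] /=; rewrite ?big_nil // !big_cons IH. Qed.

Definition dlt X Z : R := Pj X * Wj Z - Wj X * Pj Z.

Definition posj X := forall j, j \in X -> 0 < j.1.

Lemma Pj_ge0 X : posj X -> 0 <= Pj X.
Proof.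
move=> HX; rewrite /Pj big_seq; apply: sumr_ge0 => j Hj; exact: ltW (HX j Hj).
Qed.

Lemma posj_take n X : posj X -> posj (take n X).
Proof. by move=> H j Hj; apply: H; exact: mem_take Hj. Qed.
Lemma posj_drop n X : posj X -> posj (drop n X).
Proof. by move=> H j Hj; apply: H; exact: mem_drop Hj. Qed.
Lemma posj_cat X Y : posj (X ++ Y) <-> posj X /\ posj Y.
Proof.
split; first by move=> H; split=> j Hj; apply: H; rewrite mem_cat Hj ?orbT.
by move=> [H1 H2] j; rewrite mem_cat => /orP [] ?; [apply: H1| apply: H2].
Qed.

Lemma Pj_take_le n X : posj X -> Pj (take n X) <= Pj X.
Proof.
move=> H; rewrite -{2}(cat_take_drop n X) Pj_cat lerDl; apply: Pj_ge0.
exact: posj_drop.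
Qed.

Definition blk_ok Y := posj Y /\ 0 < Pj Y /\
  forall n, Pj Y * Wj (take n Y) <= Wj Y * Pj (take n Y).

Lemma blk_key X Y n : 0 <= Pj X -> blk_ok Y ->
  Pj Y * dlt X (take n Y) <= Pj (take n Y) * dlt X Y.
Proof.
move=> HX [HpY [HPY Hpre]]; have := Hpre n; rewrite /dlt.
set t := take n Y => Ht.
have : 0 <= Pj X * (Wj Y * Pj t - Pj Y * Wj t) by apply: mulr_ge0; lra.
move=> H; nra.
Qed.

Lemma blk_neg X Y n : 0 <= Pj X -> blk_ok Y -> dlt X Y <= 0 -> dlt X (take n Y) <= 0.
Proof.
move=> HX HY Hd; have K := blk_key n HX HY.
case: HY => [HpY [HPY _]].
have Ht : 0 <= Pj (take n Y) by apply: Pj_ge0; exact: posj_take.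
nra.
Qed.

Lemma blk_pos X Y n : 0 <= Pj X -> blk_ok Y -> 0 <= dlt X Y -> dlt X (take n Y) <= dlt X Y.
Proof.
move=> HX HY Hd; have K := blk_key n HX HY.
case: HY => [HpY [HPY _]].
have Ht : 0 <= Pj (take n Y) by apply: Pj_ge0; exact: posj_take.
have Ht2 : Pj (take n Y) <= Pj Y by apply: Pj_take_le.
nra.
Qed.

Lemma dlt_cat X Y Z : dlt X (Y ++ Z) = dlt X Y + dlt X Z.
Proof. rewrite /dlt Pj_cat Wj_cat; ring. Qed.
Lemma dlt_nil X : dlt X [::] = 0.
Proof. rewrite /dlt Pj_nil Wj_nil; ring. Qed.

Lemma dlt_flatten_ge0 X ys : (forall Y, Y \in ys -> 0 <= dlt X Y) -> 0 <= dlt X (flatten ys).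
Proof.
elim: ys => [|Y ys IH] H /=; first by rewrite dlt_nil.
rewrite dlt_cat; apply: addr_ge0; first by apply: H; rewrite inE eqxx.
by apply: IH => Z HZ; apply: H; rewrite inE HZ orbT.
Qed.

Definition thr ys X j :=
  (forall Y, Y \in take j ys -> 0 <= dlt X Y) /\ (forall Y, Y \in drop j ys -> dlt X Y <= 0).

Lemma thr_bound X ys j h : 0 <= Pj X -> (forall Y, Y \in ys -> blk_ok Y) -> thr ys X j ->
  dlt X (take h (flatten ys)) <= dlt X (flatten (take j ys)).
Proof.
move=> HX; elim: ys j h => [|Y ys IH] j h Hok [Ht Hd] /=.
  by rewrite lexx.
have HY : blk_ok Y by apply: Hok; rewrite inE eqxx.
have Hok' : forall Z, Z \in ys -> blk_ok Z by move=> Z HZ; apply: Hok; rewrite inE HZ orbT.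
rewrite take_cat.
case: j Ht Hd => [|j] Ht Hd /=.
  have HdY : dlt X Y <= 0 by apply: Hd; rewrite inE eqxx.
  rewrite dlt_nil; case: ifP => _; first exact: blk_neg.
  rewrite dlt_cat.
  have H0 : thr ys X 0%N.
    split=> Z; first by rewrite take0.
    by rewrite drop0 => HZ; apply: Hd; rewrite inE HZ orbT.
  have := IH 0%N (h - size Y)%N Hok' H0; rewrite take0 /= dlt_nil; lra.
have HdY : 0 <= dlt X Y by apply: Ht; rewrite inE eqxx.
rewrite dlt_cat; case: ifP => _.
  have := blk_pos h HX HY HdY.
  have : 0 <= dlt X (flatten (take j ys)).
    by apply: dlt_flatten_ge0 => Z HZ; apply: Ht; rewrite inE HZ orbT.
  lra.
have := IH j (h - size Y)%N Hok'.
have H : thr ys X j by split=> Z HZ; [apply: Ht; rewrite inE HZ orbT | apply: Hd].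
move=> /(_ H); rewrite dlt_cat; lra.
Qed.

Lemma sum_lin (L : seq job) (a b : R) :
  \sum_(x <- L) (a * x.2 - b * x.1) = a * Wj L - b * Pj L.
Proof.
elim: L => [|x L IH]; first by rewrite big_nil Wj_nil Pj_nil; ring.
by rewrite big_cons IH Wj_cons Pj_cons; ring.
Qed.

Lemma sum_term B (L : seq job) h :
  \sum_(x <- L) term B x h = Wj L * Pj (take h B) + Pj L * (Wj B - Wj (take h B)).
Proof.
elim: L => [|x L IH]; first by rewrite big_nil Wj_nil Pj_nil; ring.
by rewrite big_cons IH Wj_cons Pj_cons /term; ring.
Qed.

Lemma Pj_take_mono B a b : posj B -> (a <= b)%N -> Pj (take a B) <= Pj (take b B).
Proof.
move=> HB Hab; rewrite -(take_takel B Hab); apply: Pj_take_le; exact: posj_take.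
Qed.

Lemma mem_zip1 (X : seq job) (hs : seq nat) x : x \in zip X hs -> x.1 \in X.
Proof.
elim: X hs => [|y X IH] [|h hs] //=.
rewrite !inE => /orP [/eqP -> | H]; first by rewrite eqxx.
by rewrite (IH hs H) orbT.
Qed.

Lemma block_lb B X (hs : seq nat) hst : posj B -> blk_ok X ->
  size hs = size X -> sorted leq hs ->
  (forall h, dlt X (take h B) <= dlt X (take hst B)) ->
  \sum_(x <- X) term B x hst <= \sum_(x <- zip X hs) term B x.1 x.2.
Proof.
move=> HB [HpX [HPX Hpre]] Hs Hsort Hmax.
set PX := Pj X; set WX := Wj X.
pose f := fun x : job => PX * x.2 - WX * x.1.
pose g := fun h => Pj (take h B).
have Hab : 0 * \sum_(x <- X) f x <= \sum_(x <- zip X hs) f x.1 * g x.2.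
  apply: abel => //.
  - by move=> a b Hab; apply: Pj_take_mono.
  - move=> j; rewrite /f sum_lin.
    have := Hpre j.
    have E1 : WX = Wj (take j X) + Wj (drop j X).
      by rewrite /WX -Wj_cat cat_take_drop.
    have E2 : PX = Pj (take j X) + Pj (drop j X).
      by rewrite /PX -Pj_cat cat_take_drop.
    rewrite -/PX -/WX => H; nra.
  - by move=> h _; rewrite /g; apply: Pj_ge0; apply: posj_take.
rewrite mul0r in Hab.
have Eid : forall x h, PX * term B x h =
    f x * g h + x.1 * (PX * Wj B - dlt X (take h B)).
  by move=> x h; rewrite /term /f /g /dlt -/PX -/WX; ring.
have H2 : \sum_(x <- zip X hs) x.1.1 * (PX * Wj B - dlt X (take hst B)) <=
          \sum_(x <- zip X hs) x.1.1 * (PX * Wj B - dlt X (take x.2 B)).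
  rewrite !big_seq; apply: ler_sum => x Hx; apply: ler_wpM2l.
    by apply: ltW; apply: HpX; apply: mem_zip1 Hx.
  by have := Hmax x.2; lra.
have E3 : \sum_(x <- zip X hs) x.1.1 * (PX * Wj B - dlt X (take hst B)) =
          PX * (PX * Wj B - dlt X (take hst B)).
  by rewrite -mulr_suml (sum_zip1 (fun x => x.1)) // -/(Pj X).
have E4 : PX * \sum_(x <- zip X hs) term B x.1 x.2 =
   \sum_(x <- zip X hs) f x.1 * g x.2 +
   \sum_(x <- zip X hs) x.1.1 * (PX * Wj B - dlt X (take x.2 B)).
  by rewrite mulr_sumr -big_split /=; apply: eq_bigr => x _; rewrite Eid.
have E5 : \sum_(x <- X) term B x hst = PX * Wj B - dlt X (take hst B).
  by rewrite sum_term /dlt -/PX -/WX; ring.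
rewrite -(ler_pM2l HPX) E4 E5 -E3.
lra.
Qed.

Definition hval (ys : seq (seq job)) j := size (flatten (take j ys)).

Fixpoint thrs ys (xs : seq (seq job)) (js : seq nat) : Prop :=
  match xs, js with
  | [::], [::] => True
  | X :: xs', j :: js' => thr ys X j /\ thrs ys xs' js'
  | _, _ => False
  end.

Fixpoint hstar ys (xs : seq (seq job)) (js : seq nat) : seq nat :=
  match xs, js with
  | X :: xs', j :: js' => nseq (size X) (hval ys j) ++ hstar ys xs' js'
  | _, _ => [::]
  end.

Lemma take_hval ys j : take (hval ys j) (flatten ys) = flatten (take j ys).
Proof.
by rewrite /hval -{2}(cat_take_drop j ys) flatten_cat take_size_cat.
Qed.

Lemma posj_flatten ys : (forall Y, Y \in ys -> blk_ok Y) -> posj (flatten ys).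
Proof.
elim: ys => [|Y ys IH] H /=; first by move=> j.
apply/posj_cat; split; first by case: (H Y (mem_head _ _)).
by apply: IH => Z HZ; apply: H; rewrite inE HZ orbT.
Qed.

Lemma lower ys xs (js hs : seq nat) :
  (forall Y, Y \in ys -> blk_ok Y) -> (forall X, X \in xs -> blk_ok X) ->
  thrs ys xs js -> size hs = size (flatten xs) -> sorted leq hs ->
  cross (flatten xs) (flatten ys) (hstar ys xs js) <=
  cross (flatten xs) (flatten ys) hs.
Proof.
move=> Hys; elim: xs js hs => [|X xs IH] [|j js] hs //= Hxs.
  by move=> _ _ _; rewrite /cross; case: hs => [|h hs]; rewrite /= !big_nil.
move=> [Hthr Hthrs] Hs Hsort.
rewrite size_cat in Hs.
have HX : blk_ok X by apply: Hxs; exact: mem_head.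
rewrite -(cat_take_drop (size X) hs) /cross !zip_cat ?size_nseq //; last first.
  by rewrite size_takel // Hs leq_addr.
rewrite !big_cat /=; apply: lerD.
  rewrite sum_zip_nseq; apply: block_lb => //.
  - exact: posj_flatten.
  - by rewrite size_takel // Hs leq_addr.
  - exact: take_sorted.
  - move=> h; rewrite take_hval; apply: thr_bound => //.
    by apply: Pj_ge0; case: HX => ? _.
apply: IH => //.
- by move=> Z HZ; apply: Hxs; rewrite inE HZ orbT.
- by rewrite size_drop Hs addKn.
- exact: drop_sorted.
Qed.

Definition rdesc (X Y : seq job) := rt Y <= rt X.

Lemma rdesc_trans : transitive rdesc.
Proof. by move=> b a c; rewrite /rdesc => H1 H2; apply: le_trans H2 H1. Qed.

Lemma rt_le X Y : 0 < Pj X -> 0 < Pj Y ->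
  (rt X <= rt Y) = (Wj X * Pj Y <= Wj Y * Pj X).
Proof.
move=> HX HY; rewrite /rt ler_pdivrMr // mulrAC ler_pdivlMr //.
Qed.

Lemma dlt_ge0 X Y : 0 < Pj X -> 0 < Pj Y -> rt X <= rt Y -> 0 <= dlt X Y.
Proof. by move=> HX HY; rewrite rt_le // /dlt => H; lra. Qed.

Lemma dlt_le0 X Y : 0 < Pj X -> 0 < Pj Y -> rt Y <= rt X -> dlt X Y <= 0.
Proof. by move=> HX HY; rewrite rt_le // /dlt => H; lra. Qed.

Inductive MG : seq (seq job) -> seq (seq job) -> seq bool -> Prop :=
| MG0 : MG [::] [::] [::]
| MGA X xs ys s : (forall Y ys', ys = Y :: ys' -> rt Y <= rt X) ->
    MG xs ys s -> MG (X :: xs) ys (nseq (size X) true ++ s)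
| MGB Y xs ys s : (forall X xs', xs = X :: xs' -> rt X < rt Y) ->
    MG xs ys s -> MG xs (Y :: ys) (nseq (size Y) false ++ s).

Lemma MG_count xs ys s : MG xs ys s ->
  count id s = size (flatten xs) /\ count negb s = size (flatten ys).
Proof.
elim=> [|X xs' ys' s' _ _ [H1 H2]|Y xs' ys' s' _ _ [H1 H2]] //=;
  rewrite !count_cat !count_nseq /= ?size_cat H1 H2 ?mul1n ?mul0n //.
Qed.

Lemma prof_true n s : prof (nseq n true ++ s) = nseq n 0%N ++ prof s.
Proof. by elim: n => //= n ->. Qed.

Lemma prof_false n s : prof (nseq n false ++ s) = map (addn n) (prof s).
Proof.
elim: n => /= [|n ->]; first by rewrite map_id_in.
by rewrite -map_comp; apply: eq_map => x /=; rewrite addSn.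
Qed.

Lemma hstar_shift Y ys xs (js : seq nat) :
  hstar (Y :: ys) xs (map S js) = map (addn (size Y)) (hstar ys xs js).
Proof.
elim: xs js => [|X xs IH] [|j js] //=.
by rewrite map_cat IH map_nseq /hval /= size_cat.
Qed.

Lemma thrs_shift Y ys xs (js : seq nat) : thrs ys xs js ->
  (forall X, X \in xs -> 0 <= dlt X Y) -> thrs (Y :: ys) xs (map S js).
Proof.
elim: xs js => [|X xs IH] [|j js] //= [[H1 H2] H3] H.
split; last by apply: IH => // Z HZ; apply: H; rewrite inE HZ orbT.
split=> //= Z; rewrite inE => /orP [/eqP -> | HZ]; last exact: H1.
by apply: H; exact: mem_head.
Qed.

Lemma MG_char xs ys s : MG xs ys s ->
  (forall X, X \in xs -> blk_ok X) -> (forall Y, Y \in ys -> blk_ok Y) ->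
  sorted rdesc xs -> sorted rdesc ys ->
  exists js : seq nat, thrs ys xs js /\ prof s = hstar ys xs js.
Proof.
elim=> [|X xs' ys' s' HA _ IH|Y xs' ys' s' HB _ IH] Hxs Hys Sx Sy.
- by exists [::].
- have [js [H1 H2]] : exists js : seq nat, thrs ys' xs' js /\ prof s' = hstar ys' xs' js.
    apply: IH => //; last exact: path_sorted Sx.
    by move=> Z HZ; apply: Hxs; rewrite inE HZ orbT.
  exists (0%N :: js); split; last by rewrite prof_true H2 /= /hval take0.
  split=> //; split=> Z; first by rewrite take0.
  rewrite drop0 => HZ.
  have HX : blk_ok X by apply: Hxs; exact: mem_head.
  have HZo : blk_ok Z by apply: Hys.
  apply: dlt_le0; first by case: HX => _ [].
    by case: HZo => _ [].
  case: ys' HA Sy HZ Hys {H1 H2 IH} => [|Y0 ys0] HA Sy HZ Hys //.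
  have HY0 := HA Y0 ys0 erefl.
  move: HZ; rewrite inE => /orP [/eqP -> //| HZ].
  have := order_path_min rdesc_trans Sy => /allP /(_ Z HZ).
  rewrite /rdesc => H; exact: le_trans H HY0.
- have [js [H1 H2]] : exists js : seq nat, thrs ys' xs' js /\ prof s' = hstar ys' xs' js.
    apply: IH => //; last exact: path_sorted Sy.
    by move=> Z HZ; apply: Hys; rewrite inE HZ orbT.
  exists (map S js); split; last by rewrite prof_false H2 hstar_shift.
  apply: thrs_shift => // Z HZ.
  have HY : blk_ok Y by apply: Hys; exact: mem_head.
  have HZo : blk_ok Z by apply: Hxs.
  apply: dlt_ge0; first by case: HZo => _ [].
    by case: HY => _ [].
  case: xs' HB Sx HZ Hxs {H1 H2 IH} => [|X0 xs0] HB Sx HZ Hxs //.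
  have HX0 := HB X0 xs0 erefl.
  move: HZ; rewrite inE => /orP [/eqP -> | HZ]; first exact: ltW.
  have := order_path_min rdesc_trans Sx => /allP /(_ Z HZ).
  rewrite /rdesc => H; apply: le_trans H _; exact: ltW.
Qed.

Lemma opt_MG xs ys s : MG xs ys s ->
  (forall X, X \in xs -> blk_ok X) -> (forall Y, Y \in ys -> blk_ok Y) ->
  sorted rdesc xs -> sorted rdesc ys ->
  optimal_interleaving (flatten xs) (flatten ys) s.
Proof.
move=> HM Hxs Hys Sx Sy.
have [C1 C2] := MG_count HM.
split; first by split.
move=> s' [D1 D2].
rewrite !twct_cost !cost_interleave //.
have [js [Hth Hpr]] := MG_char HM Hxs Hys Sx Sy.
rewrite lerD2l Hpr; apply: lower => //.
- by rewrite size_prof.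
- exact: prof_sorted.
Qed.

Fixpoint norm (Y : seq job) (st : seq (seq job)) : seq (seq job) :=
  match st with
  | [::] => [:: Y]
  | Z :: st' => if rt Z <= rt Y then norm (Z ++ Y) st' else Y :: Z :: st'
  end.

Definition dpush (st : seq (seq job)) (j : job) := norm [:: j] st.
Definition decomp js := rev (foldl dpush [::] js).

Definition rinc (X Y : seq job) := rt X < rt Y.

Lemma norm_flat Y st : flatten (rev (norm Y st)) = flatten (rev st) ++ Y.
Proof.
elim: st Y => [|Z st IH] Y /=; first by rewrite cats0.
case: ifP => _.
  by rewrite IH rev_cons -cats1 flatten_cat /= cats0 catA.
by rewrite !rev_cons -!cats1 !flatten_cat /= !cats0.
Qed.

Lemma size_norm Y st : (size (norm Y st) <= (size st).+1)%N.
Proof.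
elim: st Y => [|Z st IH] Y //=; case: ifP => _ //.
by apply: leq_trans (IH _) _.
Qed.

Lemma blk_merge Z Y : blk_ok Z -> blk_ok Y -> rt Z <= rt Y -> blk_ok (Z ++ Y).
Proof.
move=> [pZ [PZ HZ]] [pY [PY HY]]; rewrite rt_le // => Hr.
split; first by apply/posj_cat.
split; first by rewrite Pj_cat; lra.
move=> n; rewrite Pj_cat Wj_cat take_cat.
case: ifP => _.
  have := HZ n; set t := take n Z => Ht.
  have Pt : 0 <= Pj t by apply: Pj_ge0; exact: posj_take.
  have K1 : 0 <= (Pj Z + Pj Y) * (Wj Z * Pj t - Pj Z * Wj t).
    by apply: mulr_ge0; lra.
  have K2 : 0 <= Pj t * (Wj Y * Pj Z - Wj Z * Pj Y) by apply: mulr_ge0; lra.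
  have K : 0 <= Pj Z * ((Wj Z + Wj Y) * Pj t - (Pj Z + Pj Y) * Wj t) by nra.
  have : 0 <= (Wj Z + Wj Y) * Pj t - (Pj Z + Pj Y) * Wj t.
    by rewrite (pmulr_rge0 _ PZ) in K.
  lra.
have := HY (n - size Z)%N; set u := take (n - size Z) Y => Hu.
rewrite Pj_cat Wj_cat.
have Pu : 0 <= Pj u by apply: Pj_ge0; exact: posj_take.
have Pu2 : Pj u <= Pj Y by apply: Pj_take_le.
have K1 : 0 <= (Pj Y - Pj u) * (Wj Y * Pj Z - Wj Z * Pj Y) by apply: mulr_ge0; lra.
have K2 : 0 <= (Pj Y + Pj Z) * (Wj Y * Pj u - Pj Y * Wj u) by apply: mulr_ge0; lra.
have K : 0 <= Pj Y * ((Wj Z + Wj Y) * (Pj Z + Pj u) - (Pj Z + Pj Y) * (Wj Z + Wj u)).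
  by nra.
have : 0 <= (Wj Z + Wj Y) * (Pj Z + Pj u) - (Pj Z + Pj Y) * (Wj Z + Wj u).
  by rewrite (pmulr_rge0 _ PY) in K.
lra.
Qed.

Lemma norm_ok Y st : blk_ok Y -> (forall Z, Z \in st -> blk_ok Z) ->
  forall Z, Z \in norm Y st -> blk_ok Z.
Proof.
elim: st Y => [|Z st IH] Y HY Hst /=.
  by move=> Z; rewrite inE => /eqP ->.
case: ifP => Hr.
  apply: IH; last by move=> Z' HZ'; apply: Hst; rewrite inE HZ' orbT.
  by apply: blk_merge => //; apply: Hst; exact: mem_head.
move=> Z'; rewrite inE => /orP [/eqP -> //|]; exact: Hst.
Qed.

Lemma norm_sorted Y st : sorted rinc st -> sorted rinc (norm Y st).
Proof.
elim: st Y => [|Z st IH] Y //= Hs.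
case: ifP => Hr; first by apply: IH; exact: path_sorted Hs.
by rewrite /= Hs andbT /rinc ltNge Hr.
Qed.

Lemma blk_single (j : job) : 0 < j.1 -> blk_ok [:: j].
Proof.
move=> Hj; split; first by move=> x; rewrite inE => /eqP ->.
rewrite /Pj /Wj big_seq1; split => // -[|n] /=; rewrite ?big_nil ?big_seq1; lra.
Qed.

Lemma decomp_inv js st : posj js ->
  (forall Z, Z \in st -> blk_ok Z) -> sorted rinc st ->
  [/\ flatten (rev (foldl dpush st js)) = flatten (rev st) ++ js,
      forall Z, Z \in foldl dpush st js -> blk_ok Z &
      sorted rinc (foldl dpush st js)].
Proof.
elim: js st => [|j js IH] st Hp Hst Hs /=; first by rewrite cats0.
have Hj : 0 < j.1 by apply: Hp; exact: mem_head.
have Hp' : posj js by move=> x Hx; apply: Hp; rewrite inE Hx orbT.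
have [E1 E2 E3] := IH (dpush st j) Hp' (norm_ok (blk_single Hj) Hst) (norm_sorted _ Hs).
by split => //; rewrite E1 norm_flat -catA.
Qed.

Lemma decomp_ok js : posj js ->
  [/\ flatten (decomp js) = js, forall Z, Z \in decomp js -> blk_ok Z &
      sorted rdesc (decomp js)].
Proof.
move=> Hp; have [E1 E2 E3] := decomp_inv Hp (st := [::]) (fun Z (H : Z \in [::]) => False_ind _ (notF H)) erefl.
split.
- by rewrite /decomp E1.
- by move=> Z; rewrite mem_rev; apply: E2.
- rewrite /decomp rev_sorted; apply: sub_sorted E3 => a b; rewrite /rinc /rdesc => H.
  exact: ltW.
Qed.

Theorem opt_decomp A B s : posj A -> posj B -> MG (decomp A) (decomp B) s ->
  optimal_interleaving A B s.
Proof.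
move=> HA HB HM.
have [A1 A2 A3] := decomp_ok HA; have [B1 B2 B3] := decomp_ok HB.
by rewrite -A1 -B1; apply: opt_MG.
Qed.
Lemma decomp_flat_gen (st : seq (seq job)) js :
  flatten (rev (foldl dpush st js)) = flatten (rev st) ++ js.
Proof.
elim: js st => [|j js IH] st /=; first by rewrite cats0.
by rewrite IH /dpush norm_flat -catA.
Qed.

Lemma decomp_flat js : flatten (decomp js) = js.
Proof. by rewrite /decomp decomp_flat_gen. Qed.

Lemma size_foldl (st : seq (seq job)) js :
  (size (foldl dpush st js) <= size st + size js)%N.
Proof.
elim: js st => [|j js IH] st /=; first by rewrite addn0.
apply: leq_trans (IH _) _; have := size_norm [:: j] st; rewrite /dpush; lia.
Qed.
End Abs.


Section Mach.
Variable R : realType.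
Local Notation job := (job R).
Local Notation state := (state R).
Implicit Types (st : state).

Definition st1 (ins : instr) (st : state) : option state :=
  let: State p ir im rr rm := st in
  let nx := p.+1 in
  match ins with
  | ISet d k     => Some (State nx (upd ir d k) im rr rm)
  | IAdd d a b   => Some (State nx (upd ir d (ir a + ir b)%N) im rr rm)
  | ISub d a b   => Some (State nx (upd ir d (ir a - ir b)%N) im rr rm)
  | ILoad d a    => Some (State nx (upd ir d (im (ir a))) im rr rm)
  | IStore a s   => Some (State nx ir (upd im (ir a) (ir s)) rr rm)
  | RSet0 d      => Some (State nx ir im (upd rr d 0) rm)
  | RSet1 d      => Some (State nx ir im (upd rr d 1) rm)
  | RAdd d a b   => Some (State nx ir im (upd rr d (rr a + rr b)) rm)
  | RSub d a b   => Some (State nx ir im (upd rr d (rr a - rr b)) rm)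
  | RMul d a b   => Some (State nx ir im (upd rr d (rr a * rr b)) rm)
  | RDiv d a b   => Some (State nx ir im (upd rr d (rr a / rr b)) rm)
  | RLoad d a    => Some (State nx ir im (upd rr d (rm (ir a))) rm)
  | RStore a s   => Some (State nx ir im rr (upd rm (ir a) (rr s)))
  | JEqI a b l   => Some (State (if ir a == ir b then l else nx) ir im rr rm)
  | JLeI a b l   => Some (State (if (ir a <= ir b)%N then l else nx) ir im rr rm)
  | JLeR a b l   => Some (State (if rr a <= rr b then l else nx) ir im rr rm)
  | Jmp l        => Some (State l ir im rr rm)
  | Halt         => None
  end.

Lemma stepE P st : step P st = st1 (nth Halt P (pc st)) st.
Proof. by case: st. Qed.

Lemma run_add P a b st : run P (a + b) st = run P b (run P a st).
Proof.
elim: a st => [|a IH] st //=.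
case E: (step P st) => [st'|]; first exact: IH.
by clear IH; case: b => //= b; rewrite E.
Qed.

Lemma run_halted P n st : halted P st -> run P n st = st.
Proof. by case: n => //= n; rewrite /halted => ->. Qed.

Definition reach P st (Q : nat -> state -> Prop) := exists k, Q k (run P k st).

Lemma reach_now P st (Q : nat -> state -> Prop) : Q 0%N st -> reach P st Q.
Proof. by exists 0%N. Qed.

Lemma reach_step P st st' (Q : nat -> state -> Prop) :
  step P st = Some st' -> reach P st' (fun k s => Q k.+1 s) -> reach P st Q.
Proof. by move=> E [k Hk]; exists k.+1; rewrite /= E. Qed.

Lemma reach_stepc P o i ir im rr rm st' ins (Q : nat -> state -> Prop) :
  nth Halt P (i + o) = ins -> st1 ins (State (i + o) ir im rr rm) = Some st' ->
  reach P st' (fun k s => Q k.+1 s) -> reach P (State (i + o) ir im rr rm) Q.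
Proof. by move=> E1 E2; apply: reach_step; rewrite stepE /= E1. Qed.

Lemma reach_seq P st (Q1 Q : nat -> state -> Prop) : reach P st Q1 ->
  (forall k1 s1, Q1 k1 s1 -> reach P s1 (fun k2 s2 => Q (k1 + k2)%N s2)) ->
  reach P st Q.
Proof.
move=> [k1 H1] H; have [k2 H2] := H _ _ H1.
by exists (k1 + k2)%N; rewrite run_add.
Qed.

Lemma reach_weak P st (Q1 Q : nat -> state -> Prop) : reach P st Q1 ->
  (forall k s, Q1 k s -> Q k s) -> reach P st Q.
Proof. by move=> [k H1] H; exists k; apply: H. Qed.

Lemma upd_eq T (f : nat -> T) a v x : x = a -> upd f a v x = v.
Proof. by move=> ->; rewrite /upd eqxx. Qed.
Lemma upd_ne T (f : nat -> T) a v x : x <> a -> upd f a v x = f x.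
Proof. by move=> H; rewrite /upd; case: eqP. Qed.

(* Code for the stack-based decomposition of one chain, at offset o.   *)
Definition dcode (o : nat) : program := [::
 (*0*) JEqI 4 0 (34 + o);
 (*1*) RLoad 0 3;
 (*2*) IAdd 3 3 1;
 (*3*) RLoad 1 3;
 (*4*) IAdd 3 3 1;
 (*5*) ISub 4 4 1;
 (*6*) RStore 6 0;
 (*7*) IAdd 8 6 1;
 (*8*) RStore 8 1;
 (*9*) IStore 6 1;
 (*10*) IAdd 6 6 2;
 (*11*) JLeI 6 7 (0 + o);
 (*12*) ISub 8 6 2;
 (*13*) ISub 9 8 2;
 (*14*) IAdd 10 8 1;
 (*15*) IAdd 11 9 1;
 (*16*) RLoad 2 8;
 (*17*) RLoad 3 10;
 (*18*) RLoad 4 9;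
 (*19*) RLoad 5 11;
 (*20*) RDiv 6 3 2;
 (*21*) RDiv 7 5 4;
 (*22*) JLeR 7 6 (24 + o);
 (*23*) Jmp (0 + o);
 (*24*) RAdd 4 4 2;
 (*25*) RAdd 5 5 3;
 (*26*) RStore 9 4;
 (*27*) RStore 11 5;
 (*28*) ILoad 12 8;
 (*29*) ILoad 13 9;
 (*30*) IAdd 13 13 12;
 (*31*) IStore 9 13;
 (*32*) ISub 6 6 2;
 (*33*) Jmp (11 + o) ].

Definition stk_ok (base : nat) (st : seq (seq job)) (im : nat -> nat) (rm : nat -> R) :=
  forall l, (l < size st)%N ->
    [/\ rm (base + 2 * l)%N = Pj (nth [::] (rev st) l),
        rm (base + 2 * l).+1 = Wj (nth [::] (rev st) l) &
        im (base + 2 * l)%N = size (nth [::] (rev st) l)].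

Definition inp_ok (inp : nat) (js : seq job) (rm0 : nat -> R) :=
  forall i, (i < size js)%N ->
    rm0 (inp + 2 * i)%N = (nth (0, 0) js i).1 /\ rm0 (inp + 2 * i).+1 = (nth (0, 0) js i).2.

Definition dinv (pc0 : nat) (base iend : nat) (rm0 : nat -> R) (im0 : nat -> nat)
   (irf : nat -> nat) (js : seq job) (st : seq (seq job)) (s : state) :=
  let: State pc ir im rr rm := s in
  [/\ pc = pc0, [/\ ir 0 = 0, ir 1 = 1, ir 2 = 2, ir 5 = base & ir 7 = base + 2]%N,
      [/\ ir 6 = base + 2 * size st, ir 4 = size js, inp_ok (ir 3) js rm0,
         ir 3 + 2 * size js = iend & iend <= base]%N &
      [/\ forall x, (x < base)%N -> rm x = rm0 x /\ im x = im0 x,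
          stk_ok base st im rm & forall r, (14 <= r)%N -> ir r = irf r]].

End Mach.

Local Open Scope nat_scope.
Section Decomp.
Variable R : realType.
Variables (P : program) (o : nat).
Hypothesis Hc : forall i, (i < 34)%N -> nth Halt P (i + o) = nth Halt (dcode o) i.

Ltac dstep i := apply: (@reach_stepc R P o i); [by rewrite Hc | reflexivity | ].

Ltac simpif := repeat (first [ rewrite ifN_eq; last by lia | rewrite ifT; last by apply/eqP; lia ]).

Lemma stk_tail base (Y : seq (job R)) st im rm :
  stk_ok base (Y :: st) im rm -> stk_ok base st im rm.
Proof.
move=> H l Hl; have := H l (leq_trans Hl (leqnSn _)).
by rewrite rev_cons nth_rcons size_rev Hl.
Qed.

Lemma stk_set base st (Y : seq (job R)) im rm im' rm' : stk_ok base st im rm ->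
  rm' (base + 2 * size st) = Pj Y -> rm' (base + 2 * size st).+1 = Wj Y ->
  im' (base + 2 * size st) = size Y ->
  (forall x, x < base + 2 * size st -> rm' x = rm x /\ im' x = im x) ->
  stk_ok base (Y :: st) im' rm'.
Proof.
move=> H E1 E2 E3 Fr l; rewrite /= ltnS leq_eqVlt => /orP [/eqP -> | Hl].
  by rewrite rev_cons nth_rcons size_rev ltnn eqxx.
rewrite rev_cons nth_rcons size_rev Hl; have [A1 A2 A3] := H l Hl.
have [F1 F3] := Fr (base + 2 * l) ltac:(lia).
have [F2 _] := Fr (base + 2 * l).+1 ltac:(lia).
by rewrite F1 F2 F3.
Qed.

Lemma nth_rev_Z (Y Z : seq (job R)) rest :
  nth [::] (rev [:: Y, Z & rest]) (size rest) = Z.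
Proof. by rewrite !rev_cons nth_rcons size_rcons size_rev ltnSn nth_rcons size_rev ltnn eqxx. Qed.

Lemma nth_rev_Y (Y Z : seq (job R)) rest :
  nth [::] (rev [:: Y, Z & rest]) (size rest).+1 = Y.
Proof. by rewrite !rev_cons nth_rcons size_rcons size_rev ltnn eqxx. Qed.

Lemma merge_loop base iend rm0 im0 irf js rest Y (s : state R) :
  dinv (11 + o) base iend rm0 im0 irf js (Y :: rest) s ->
  reach P s (fun k s' => dinv o base iend rm0 im0 irf js (norm Y rest) s' /\
                 (k + 22 * size (norm Y rest) <= 22 * (size rest).+1 + 13)%N).
Proof.
elim: rest Y s => [|Z rest IH] Y [pc ir im rr rm]
  [Hpc [H0 H1 H2 H5 H7] [H6 H4 Hinp Hie Hle] [Hfr Hstk Hirf]]; subst pc.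
- dstep 11.
  have -> : ir 6 <= ir 7 by rewrite H6 H7 /=; lia.
  apply: reach_now; split; last by rewrite /=; lia.
  by split.
dstep 11.
have -> : ir 6 <= ir 7 = false by rewrite H6 H7 /=; lia.
dstep 12. dstep 13. dstep 14. dstep 15. dstep 16. dstep 17. dstep 18. dstep 19.
dstep 20. dstep 21. dstep 22.
rewrite /upd /=.
have EY : ir 6 - ir 2 = base + 2 * (size rest).+1 by rewrite H6 H2 /=; lia.
rewrite EY H2 H1.
have EZ : base + 2 * (size rest).+1 - 2 = base + 2 * size rest by lia.
rewrite EZ !addn1.
have [SZ1 SZ2 SZ3] := Hstk (size rest) (leqnSn _).
have [SY1 SY2 SY3] := Hstk (size rest).+1 (leqnn _).
rewrite (nth_rev_Z Y Z rest) in SZ1 SZ2 SZ3.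
rewrite (nth_rev_Y Y Z rest) in SY1 SY2 SY3.
rewrite SZ1 SZ2 SY1 SY2 -/(rt Z) -/(rt Y).
case: ifP => Hr.
  dstep 24. dstep 25. dstep 26. dstep 27. dstep 28. dstep 29. dstep 30. dstep 31.
  dstep 32. dstep 33.
  apply: (reach_weak (IH (Z ++ Y) _ _)); last first.
    by move=> k s [Hd Hk]; split => //; lia.
  rewrite /upd /=.
  split; [done | by split | by split => //; rewrite EY | split].
  - by move=> x Hx; simpif; exact: Hfr.
  - apply: (stk_set (stk_tail (stk_tail Hstk))) => /=; simpif.
    + by rewrite Pj_cat.
    + by rewrite Wj_cat.
    + by rewrite SZ3 SY3 size_cat.
    + move=> x Hx; simpif; done.
  - by move=> r Hr0; simpif; exact: Hirf.
dstep 23; apply: reach_now; rewrite /upd /=; split; last by lia.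
split => //; split => //.
by move=> r Hr0; simpif; exact: Hirf.
Qed.

Lemma inp_shift inp (j : job R) js rm0 : inp_ok inp (j :: js) rm0 -> inp_ok (inp + 1 + 1) js rm0.
Proof.
move=> H i Hi; have := H i.+1 Hi.
by have -> : inp + 2 * i.+1 = inp + 1 + 1 + 2 * i by lia.
Qed.

Lemma outer_loop base iend rm0 im0 irf js st (s : state R) :
  dinv o base iend rm0 im0 irf js st s ->
  reach P s (fun k s' => dinv (34 + o) base iend rm0 im0 irf [::] (foldl (@dpush R) st js) s' /\
      k + 22 * size (foldl (@dpush R) st js) <= 46 * size js + 22 * size st + 1).
Proof.
elim: js st s => [|j js IH] st [pc ir im rr rm]
  [Hpc [H0 H1 H2 H5 H7] [H6 H4 Hinp Hie Hle] [Hfr Hstk Hirf]]; subst pc.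
  dstep 0%N; rewrite H4 H0 eqxx.
  apply: reach_now; split; last by rewrite /=; lia.
  by split.
dstep 0%N; rewrite H4 H0 /=.
dstep 1. dstep 2. dstep 3. dstep 4. dstep 5. dstep 6. dstep 7. dstep 8. dstep 9.
dstep 10.
have [I1 I2] := Hinp 0 erefl; rewrite addn0 /= in I1 I2.
have [F1 _] := Hfr (ir 3) ltac:(rewrite /= in Hie; lia).
have [F2 _] := Hfr (ir 3).+1 ltac:(rewrite /= in Hie; lia).
apply: (reach_seq (merge_loop (base := base) (iend := iend) (rm0 := rm0) (im0 := im0)
   (irf := irf) (js := js) (rest := st) (Y := [:: j]) _)).
  rewrite /upd /= H1 H2 H4 H6 !addn1 F1 F2 I1 I2.
  split; [done | by split | split => //=; try lia | split].
  - by have := inp_shift Hinp; rewrite !addn1.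
  - by rewrite /= in Hie; lia.
  - by move=> x Hx; simpif; exact: Hfr.
  - apply: (stk_set Hstk) => /=; simpif.
    + by rewrite Pj_cons Pj_nil addr0.
    + by rewrite Wj_cons Wj_nil addr0.
    + done.
    + by move=> x Hx; simpif.
  - by move=> r Hr0; simpif; exact: Hirf.
move=> k1 s1 [Hd Hk1].
apply: (reach_weak (IH _ _ Hd)) => k2 s2 [Hd2 Hk2]; split => //.
have := size_norm [:: j] st; rewrite /= /dpush in Hk2 Hk1 *; lia.
Qed.

End Decomp.
Local Open Scope nat_scope.

Definition prelude : program := [::
 (*0*) ISet 1 1; (*1*) ISet 2 2; (*2*) ILoad 14 0; (*3*) ILoad 15 1;
 (*4*) IAdd 16 14 15; (*5*) IAdd 5 16 16; (*6*) IAdd 5 5 2; (*7*) IAdd 6 5 0;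
 (*8*) IAdd 7 5 2; (*9*) IAdd 19 5 0; (*10*) IAdd 4 14 0].
Definition midc : program := [::
 (*45*) IAdd 17 6 0; (*46*) IAdd 5 6 0; (*47*) IAdd 7 5 2; (*48*) IAdd 4 15 0].
Definition mcode : program := [::
 (*83*) IAdd 18 19 0;
 (*84*) IAdd 20 17 0;
 (*85*) ISet 21 2;
 (*86*) JEqI 18 17 98;
 (*87*) JEqI 20 6 100;
 (*88*) IAdd 22 18 1;
 (*89*) RLoad 8 18;
 (*90*) RLoad 9 22;
 (*91*) IAdd 23 20 1;
 (*92*) RLoad 10 20;
 (*93*) RLoad 11 23;
 (*94*) RDiv 12 9 8;
 (*95*) RDiv 13 11 10;
 (*96*) JLeR 13 12 100;
 (*97*) Jmp 108;
 (*98*) JEqI 20 6 112;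
 (*99*) Jmp 108;
 (*100*) ILoad 24 18;
 (*101*) JEqI 24 0 106;
 (*102*) IStore 21 1;
 (*103*) IAdd 21 21 1;
 (*104*) ISub 24 24 1;
 (*105*) Jmp 101;
 (*106*) IAdd 18 18 2;
 (*107*) Jmp 86;
 (*108*) ILoad 24 20;
 (*109*) IAdd 21 21 24;
 (*110*) IAdd 20 20 2;
 (*111*) Jmp 86;
 (*112*) Halt ].

Definition prog : program := prelude ++ dcode 11 ++ midc ++ dcode 49 ++ mcode.

Section MergePhase.
Variable R : realType.
Variables (baseA topA topB : nat) (xs ys : seq (seq (job R))).
Hypothesis HtA : topA = baseA + 2 * size xs.
Hypothesis HtB : topB = topA + 2 * size ys.

Ltac mstep i := apply: (@reach_stepc R prog 0 i); [reflexivity | reflexivity | ].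

Definition blk_mem base (bs : seq (seq (job R))) (im : nat -> nat) (rm : nat -> R) :=
  forall l, l < size bs ->
    [/\ rm (base + 2 * l) = Pj (nth [::] bs l), rm (base + 2 * l).+1 = Wj (nth [::] bs l)
      & im (base + 2 * l) = size (nth [::] bs l)].

Definition out_ok (pre : seq bool) (im : nat -> nat) :=
  forall t, 2 + t < baseA -> (im (2 + t) != 0) = nth false pre t.

Definition mcore (pc0 : nat) (i j : nat) (pre : seq bool) (s : state R) :=
  let: State pc ir im rr rm := s in
  [/\ pc = pc0,
      [/\ ir 0 = 0, ir 1 = 1, ir 2 = 2, ir 17 = topA & ir 6 = topB],
      [/\ ir 18 = baseA + 2 * i, ir 20 = topA + 2 * j, ir 21 = 2 + size pre,
          i <= size xs & j <= size ys] &
      [/\ blk_mem baseA xs im rm, blk_mem topA ys im rm & out_ok pre im] ].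

Lemma blk_mem_upd base bs im rm a v : blk_mem base bs im rm -> a < base ->
  blk_mem base bs (upd im a v) rm.
Proof. by move=> H Ha l Hl; rewrite upd_ne; [exact: H | lia]. Qed.

Lemma out_false pre c im : out_ok pre im -> out_ok (pre ++ nseq c false) im.
Proof.
move=> H t Ht; rewrite H // nth_cat nth_nseq if_same.
by case: ltnP => // Hge; rewrite nth_default.
Qed.

Lemma out_true pre im : out_ok pre im -> 2 + size pre < baseA ->
  out_ok (pre ++ [:: true]) (upd im (2 + size pre) 1).
Proof.
move=> H Hs t Ht; rewrite nth_cat /upd.
case: (ltngtP t (size pre)) => Htp.
- rewrite ifN_eq; last by lia.
  by rewrite H.
- rewrite ifN_eq; last by lia.
  rewrite H; last by lia.
  rewrite !nth_default //=; lia.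
- by rewrite Htp subnn eqxx.
Qed.

Lemma takeA c i j pre (s : state R) : mcore 101 i j pre s -> Defs.ir s 24 = c ->
  2 + size pre + c <= baseA ->
  reach prog s (fun k s' => mcore 106 i j (pre ++ nseq c true) s' /\ k = 5 * c + 1).
Proof.
elim: c pre s => [|c IH] pre [pc ir im rr rm]
  [Hpc [H0 H1 H2 H17 H6] [H18 H20 H21 Hi Hj] [HA HB Ho]] /= H24 Hb; subst pc.
  mstep 101; rewrite H24 H0 eqxx.
  by apply: reach_now; rewrite cats0.
mstep 101; rewrite H24 H0 /=.
mstep 102. mstep 103. mstep 104. mstep 105.
apply: (reach_weak (IH (pre ++ [:: true]) _ _ _ _)).
- rewrite {1 2 3}/upd /= H21 H1 H0 H2 H17 H6 H18 H20 size_cat /=; split => //.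
  split.
  + by apply: blk_mem_upd => //; lia.
  + by apply: blk_mem_upd => //; lia.
  + by apply: out_true => //; lia.
- rewrite /upd /= H24 H1; lia.
- by rewrite size_cat /=; lia.
- by move=> k s' [Hm Hk]; move: Hm; rewrite -catA /= => Hm; split => //; lia.
Qed.


Lemma doA i j pre (s : state R) : mcore 100 i j pre s -> i < size xs ->
  2 + size pre + size (nth [::] xs i) <= baseA ->
  reach prog s (fun k s' =>
    mcore 86 i.+1 j (pre ++ nseq (size (nth [::] xs i)) true) s' /\
    k = 5 * size (nth [::] xs i) + 4).
Proof.
case: s => pc ir im rr rm [Hpc [H0 H1 H2 H17 H6] [H18 H20 H21 Hi Hj] [HA HB Ho]] Hix Hb.
subst pc; mstep 100.
have [_ _ HAi] := HA i Hix.
apply: (reach_seq (takeA (c := size (nth [::] xs i)) (i := i) (j := j) (pre := pre) _ _ _)).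
- by rewrite /upd /=; split.
- by rewrite /upd /= H18 HAi.
- done.
move=> k1 [pc1 ir1 im1 rr1 rm1] [[Hpc1 [G0 G1 G2 G17 G6] [G18 G20 G21 Gi Gj] [GA GB Go]] Hk1].
subst pc1.
mstep 106. mstep 107.
apply: reach_now; split; last by lia.
rewrite /upd /=; split => //; split => //; rewrite ?G18; lia.
Qed.

Lemma doB i j pre (s : state R) : mcore 108 i j pre s -> j < size ys ->
  reach prog s (fun k s' =>
    mcore 86 i j.+1 (pre ++ nseq (size (nth [::] ys j)) false) s' /\ k = 4).
Proof.
case: s => pc ir im rr rm [Hpc [H0 H1 H2 H17 H6] [H18 H20 H21 Hi Hj] [HA HB Ho]] Hjy.
subst pc; mstep 108. mstep 109. mstep 110. mstep 111.
have [_ _ HBj] := HB j Hjy.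
apply: reach_now; split => //.
rewrite /upd /=; split => //.
  split => //; rewrite ?H20 ?H21 ?H2 ?HBj ?size_cat ?size_nseq; lia.
split => //; exact: out_false.
Qed.

Lemma size_flatten_drop (bs : seq (seq (job R))) i : i < size bs ->
  size (flatten (drop i bs)) = size (nth [::] bs i) + size (flatten (drop i.+1 bs)).
Proof. by move=> H; rewrite (drop_nth [::] H) /= size_cat. Qed.

Lemma mloop N i j pre (s : state R) :
  size xs - i + (size ys - j) <= N -> mcore 86 i j pre s ->
  2 + size pre + size (flatten (drop i xs)) + size (flatten (drop j ys)) <= baseA ->
  reach prog s (fun k s' => halted prog s' /\
     exists so, MG (drop i xs) (drop j ys) so /\ out_ok (pre ++ so) (Defs.im s') /\
     k <= 16 * (size xs - i + (size ys - j)) + 5 * size (flatten (drop i xs)) + 2).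
Proof.
elim: N i j pre s => [|N IH] i j pre [pc ir im rr rm] HN
  [Hpc [H0 H1 H2 H17 H6] [H18 H20 H21 Hi Hj] [HA HB Ho]] Hb; subst pc.
  have Ei : i = size xs by lia.
  have Ej : j = size ys by lia.
  mstep 86; rewrite H18 H17 ifT; last by apply/eqP; lia.
  mstep 98; rewrite H20 H6 ifT; last by apply/eqP; lia.
  apply: reach_now; split => //.
  exists [::]; rewrite Ei Ej !drop_size cats0; split; [exact: MG0 | split => //]; lia.
case: (ltnP i (size xs)) => Hix; last first.
  have Ei : i = size xs by lia.
  mstep 86; rewrite H18 H17 ifT; last by apply/eqP; lia.
  case: (ltnP j (size ys)) => Hjy; last first.
    have Ej : j = size ys by lia.
    mstep 98; rewrite H20 H6 ifT; last by apply/eqP; lia.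
    apply: reach_now; split => //.
    exists [::]; rewrite Ei Ej !drop_size cats0; split; [exact: MG0 | split => //]; lia.
  mstep 98; rewrite H20 H6 ifN_eq; last by lia.
  mstep 99.
  have HsY := size_flatten_drop Hjy.
  apply: (reach_seq (doB (i:=i) (j:=j) (pre:=pre) _ Hjy)); first by split.
  move=> k1 s1 [Hm1 Hk1].
  apply: (reach_weak (IH i j.+1 _ s1 _ Hm1 _)).
  - by lia.
  - by rewrite size_cat size_nseq; lia.
  move=> k2 s2 [Hh [so [HM [Ho2 Hk2]]]]; split => //.
  exists (nseq (size (nth [::] ys j)) false ++ so); split.
  + rewrite (drop_nth [::] Hjy); apply: MGB => //.
    by move=> X xs'; rewrite Ei drop_size.
  + split; first by rewrite catA.
    lia.
mstep 86; rewrite H18 H17 ifN_eq; last by lia.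
have [HX1 HX2 HX3] := HA i Hix.
have HsX := size_flatten_drop Hix.
case: (ltnP j (size ys)) => Hjy; last first.
  mstep 87; rewrite H20 H6 ifT; last by apply/eqP; lia.
  apply: (reach_seq (doA (i:=i) (j:=j) (pre:=pre) _ Hix _)); [by split | lia |].
  move=> k1 s1 [Hm1 Hk1].
  apply: (reach_weak (IH i.+1 j _ s1 _ Hm1 _)).
  - by lia.
  - by rewrite size_cat size_nseq; lia.
  move=> k2 s2 [Hh [so [HM [Ho2 Hk2]]]]; split => //.
  exists (nseq (size (nth [::] xs i)) true ++ so); split.
  + rewrite (drop_nth [::] Hix); apply: MGA => //.
    have -> : j = size ys by lia.
    by move=> Y ys'; rewrite drop_size.
  + split; first by rewrite catA.
    lia.
mstep 87; rewrite H20 H6 ifN_eq; last by lia.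
have [HY1 HY2 HY3] := HB j Hjy.
have HsY := size_flatten_drop Hjy.
mstep 88. mstep 89. mstep 90. mstep 91. mstep 92. mstep 93. mstep 94. mstep 95.
mstep 96.
rewrite /upd /= H18 H20 H1 !addn1 HX1 HX2 HY1 HY2 -/(rt (nth [::] xs i)) -/(rt (nth [::] ys j)).
case: ifP => Hcmp.
  apply: (reach_seq (doA (i:=i) (j:=j) (pre:=pre) _ Hix _)); [by split | lia |].
  move=> k1 s1 [Hm1 Hk1].
  apply: (reach_weak (IH i.+1 j _ s1 _ Hm1 _)).
  - by lia.
  - by rewrite size_cat size_nseq; lia.
  move=> k2 s2 [Hh [so [HM [Ho2 Hk2]]]]; split => //.
  exists (nseq (size (nth [::] xs i)) true ++ so); split.
  + rewrite (drop_nth [::] Hix); apply: MGA => //.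
    by move=> Y ys'; rewrite (drop_nth [::] Hjy) => -[<- _].
  + split; first by rewrite catA.
    lia.
mstep 97.
apply: (reach_seq (doB (i:=i) (j:=j) (pre:=pre) _ Hjy)); first by split.
move=> k1 s1 [Hm1 Hk1].
apply: (reach_weak (IH i j.+1 _ s1 _ Hm1 _)).
- by lia.
- by rewrite size_cat size_nseq; lia.
move=> k2 s2 [Hh [so [HM [Ho2 Hk2]]]]; split => //.
exists (nseq (size (nth [::] ys j)) false ++ so); split.
+ rewrite (drop_nth [::] Hjy); apply: MGB => //.
  by move=> X xs'; rewrite (drop_nth [::] Hix) => -[<- _]; rewrite ltNge Hcmp.
+ split; first by rewrite catA.
  lia.
Qed.
End MergePhase.
Local Open Scope nat_scope.

Ltac mstep i := apply: (@reach_stepc _ prog 0 i); [reflexivity | reflexivity | ].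

Lemma Hc11 : forall i, i < 34 -> nth Halt prog (i + 11) = nth Halt (dcode 11) i.
Proof.
move=> i Hi; rewrite /prog nth_cat (_ : size prelude = 11) // ifN; last by lia.
by rewrite addnK nth_cat (_ : size (dcode 11) = 34) // Hi.
Qed.

Lemma Hc49 : forall i, i < 34 -> nth Halt prog (i + 49) = nth Halt (dcode 49) i.
Proof.
move=> i Hi; rewrite /prog nth_cat (_ : size prelude = 11) // ifN; last by lia.
rewrite nth_cat (_ : size (dcode 11) = 34) // ifN; last by lia.
rewrite nth_cat (_ : size midc = 4) // ifN; last by lia.
have -> : i + 49 - 11 - 34 - 4 = i by lia.
by rewrite nth_cat (_ : size (dcode 49) = 34) // Hi.
Qed.

Lemma enc_nth (R : realType) (L : seq (job R)) i : i < size L ->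
  nth 0%R (flatten [seq [:: j.1; j.2] | j <- L]) (2 * i) = (nth (0%R, 0%R) L i).1 /\
  nth 0%R (flatten [seq [:: j.1; j.2] | j <- L]) (2 * i).+1 = (nth (0%R, 0%R) L i).2.
Proof.
elim: L i => [|x L IH] [|i] // Hi.
have -> : 2 * i.+1 = (2 * i).+2 by lia.
by apply: IH.
Qed.

Lemma stk_blk (R : realType) base (st : seq (seq (job R))) im rm im' rm' :
  stk_ok base st im rm ->
  (forall x, x < base + 2 * size st -> rm' x = rm x /\ im' x = im x) ->
  blk_mem base (rev st) im' rm'.
Proof.
move=> H Fr l; rewrite size_rev => Hl.
have [A1 A2 A3] := H l Hl.
have [F1 F3] := Fr (base + 2 * l) ltac:(lia).
have [F2 _] := Fr (base + 2 * l).+1 ltac:(lia).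
by rewrite F1 F2 F3.
Qed.

Section Main.
Variable R : realType.
Variables A B : seq (job R).

Lemma prog_correct :
  reach prog (init_state A B) (fun k s' => halted prog s' /\
     k <= 67 * (size A + size B) + 22 /\
     exists so, MG (decomp A) (decomp B) so /\ out_ok (2 * (size A + size B) + 2) so (Defs.im s')).
Proof.
rewrite /init_state.
mstep 0. mstep 1. mstep 2. mstep 3. mstep 4. mstep 5. mstep 6. mstep 7. mstep 8. mstep 9. mstep 10.
rewrite /upd /=.
set n := size A + size B.
set rmI := [eta nth 0%R (flatten [seq [:: j.1; j.2] | j <- A ++ B])].
set imI := fun i : nat => if i == 0 then size A else if i == 1 then size B else 0.
have HinpA : inp_ok 0 A rmI.
  move=> i Hi; rewrite /rmI /=.
  have [E1 E2] := enc_nth (L := A ++ B) (i := i) ltac:(rewrite size_cat; lia).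
  by rewrite E1 E2 nth_cat Hi.
apply: (reach_seq (outer_loop Hc11 (base := 2 * n + 2) (iend := 2 * size A) (rm0 := rmI)
   (im0 := imI) (js := A) (st := [::]) _)).
  split => //=.
  - split => //; rewrite /n; lia.
  - split => //; rewrite /n; lia.
move=> k1 [pc2 ir2 im2 rr2 rm2] [[Hpc2 [G0 G1 G2 G5 G7] [G6 G4 Ginp Gie Gle] [Gfr Gstk Girf]] Hk1].
subst pc2.
mstep 45. mstep 46. mstep 47. mstep 48.
rewrite /upd /=.
rewrite /= in Gie G6.
have Hir3 : ir2 3 = 2 * size A by lia.
have HinpB : inp_ok (2 * size A) B rm2.
  move=> i Hi.
  have [F1 _] := Gfr (2 * size A + 2 * i) ltac:(rewrite /n; lia).
  have [F2 _] := Gfr (2 * size A + 2 * i).+1 ltac:(rewrite /n; lia).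
  rewrite F1 F2 /rmI /=.
  have [E1 E2] := enc_nth (L := A ++ B) (i := size A + i) ltac:(rewrite size_cat; lia).
  have -> : 2 * size A + 2 * i = 2 * (size A + i) by lia.
  by rewrite E1 E2 nth_cat ltnNge leq_addr /= addKn.
have G15 : ir2 15 = size B by rewrite Girf.
apply: (reach_seq (outer_loop Hc49 (base := 2 * n + 2 + 2 * size (foldl (dpush (R:=R)) [::] A)) (iend := 2 * n)
   (rm0 := rm2) (im0 := im2) (js := B) (st := [::]) _)).
  split => //=.
  - split => //; rewrite ?G6 ?G0 ?G1 ?G2; lia.
  - split => //; rewrite ?G6 ?G0 ?G15 ?Hir3 //; rewrite /n; lia.
move=> k2 [pc3 ir3 im3 rr3 rm3] [[Hpc3 [J0 J1 J2 J5 J7] [J6 J4 Jinp Jie Jle] [Jfr Jstk Jirf]] Hk2].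
subst pc3.
mstep 83. mstep 84. mstep 85.
have E19 : ir3 19 = 2 * n + 2 by rewrite Jirf //= Girf //=; lia.
have E17 : ir3 17 = 2 * n + 2 + 2 * size (foldl (dpush (R:=R)) [::] A)
  by rewrite Jirf //= G6 G0; lia.
have FA := decomp_flat A; have FB := decomp_flat B.
rewrite /decomp in FA FB.
have SA := size_foldl [::] A; have SB := size_foldl [::] B.
apply: (reach_weak (@mloop R (2 * n + 2) (2 * n + 2 + 2 * size (foldl (dpush (R:=R)) [::] A))
   (2 * n + 2 + 2 * size (foldl (dpush (R:=R)) [::] A) + 2 * size (foldl (dpush (R:=R)) [::] B))
   (rev (foldl (dpush (R:=R)) [::] A)) (rev (foldl (dpush (R:=R)) [::] B)) _ _
   (size (foldl (dpush (R:=R)) [::] A) + size (foldl (dpush (R:=R)) [::] B)) 0 0 [::] _ _ _ _)).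
- by rewrite ?size_rev.
- by rewrite ?size_rev.
- by rewrite !size_rev !subn0.
- rewrite /upd /=; split => //.
  + split => //; rewrite ?E19 ?E17 ?J0; lia.
  + split.
    * apply: stk_blk Gstk _ => x Hx; apply: Jfr; lia.
    * by apply: stk_blk Jstk _ => x Hx.
    * move=> t Ht; have [_ F1] := Jfr (2 + t) ltac:(lia).
      have [_ F2] := Gfr (2 + t) ltac:(lia).
      by rewrite F1 F2 /imI /= nth_nil.
- by rewrite !drop0 FA FB /n /=; lia.
move=> k3 s3 [Hh [so [HM [Ho Hk3]]]]; split => //; split.
  rewrite !subn0 !drop0 FA !size_rev /= in Hk3 Hk1 Hk2; rewrite /n; lia.
by exists so; rewrite !drop0 in HM.
Qed.
End Main.

Lemma size_count (s : seq bool) : size s = count id s + count negb s.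
Proof. by elim: s => [|[] s IH] //=; rewrite IH; lia. Qed.

Local Open Scope ring_scope.

Theorem lemma2 :
  exists (P : program) (c : nat),
    forall (R : realType) (A B : seq (job R)),
      valid_instance A B ->
      let fin := run P (c * (size A + size B) + c)%N (init_state A B) in
      halted P fin /\ optimal_interleaving A B (output A B fin).
Proof.
exists prog, 100%N => R A B Hv fin.
have [k [Hh [Hk [so [HM Ho]]]]] := prog_correct A B.
have Efin : fin = run prog k (init_state A B).
  rewrite /fin (_ : (100 * (size A + size B) + 100 = k + (100 * (size A + size B) + 100 - k))%N);
    last by lia.
  by rewrite run_add run_halted.
rewrite Efin; split => //.
have [C1 C2] := MG_count HM.
rewrite !decomp_flat in C1 C2.
have Hout : output A B (run prog k (init_state A B)) = so.
  apply: (@eq_from_nth _ false).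
    by rewrite size_map size_iota (size_count so) C1 C2.
  move=> t; rewrite size_map size_iota => Ht.
  rewrite (nth_map 0%N) ?size_iota // nth_iota // add0n.
  by apply: Ho; lia.
rewrite Hout; apply: opt_decomp => //.
- by move=> j Hj; case: (Hv j); rewrite // mem_cat Hj.
- by move=> j Hj; case: (Hv j); rewrite // mem_cat Hj orbT.
Qed.
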